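(* The space $(\mathbb{R}^{\mathbb{Z}_<},\tau_\iota)$ is not connected, and it is a Hausdorff space.
   Context: $\mathbb{R}^{\mathbb{Z}_<}$ is the set of formal series $\sum_{i\ge -k}a_i\epsilon^i$ ($k\in\mathbb{N}\cup\{0\}$, $a_i\in\mathbb{R}$), written $\langle a_{-k},\dots,\widehat{a_0},a_1,\dots\rangle$, with coefficientwise addition, Cauchy-product multiplication and lexicographic order; $|\cdot|$ is the associated absolute value, $d(\mathbf{x},\mathbf{y})=|\mathbf{y}-\mathbf{x}|$, $B_{\mathbf{x}}(\mathbf{y})=\{\mathbf{z}:d(\mathbf{x},\mathbf{z})<\mathbf{y}\}$. For $m\in\mathbb{N}\cup\{0\}$ let $\Delta^m=\{a\epsilon^m: a\in\mathbb{R}\}$ (with $a\neq 0$ when $m\ge1$) and $\Delta^{\downarrow m}=\bigcup_{n\ge m}\Delta^n$. A set $O$ is $\iota$-open iff for every $\mathbf{x}\in O$ there is a positive $\iota\in\Delta^{\downarrow m}$ (for some $m$) with $B_{\mathbf{x}}(\iota)\subseteq O$; $\tau_\iota$ is the topology generated by unions of such $\iota$-balls. *)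

(* Defs.v *)
(* the field R^{Z_<} of formal series sum_{i >= -k} a_i eps^i. *)
From Stdlib Require Import Reals ZArith Lra Lia ClassicalEpsilon.
Open Scope R_scope.

Record LC : Type := mkLC {
  coef : Z -> R;
  coef_lb : exists k : Z, forall i : Z, (i < k)%Z -> coef i = 0
}.

Definition LCzero : LC.
Proof. refine (mkLC (fun _ => 0) _). exists 0%Z. reflexivity. Defined.

Definition LCopp (x : LC) : LC.
Proof.
  refine (mkLC (fun i => - coef x i) _).
  destruct (coef_lb x) as [k Hk]. exists k. intros i Hi. rewrite Hk; [lra|lia].
Defined.

Definition LCadd (x y : LC) : LC.
Proof.
  refine (mkLC (fun i => coef x i + coef y i) _).
  destruct (coef_lb x) as [k Hk]. destruct (coef_lb y) as [l Hl].
  exists (Z.min k l). intros i Hi. rewrite Hk by lia. rewrite Hl by lia. lra.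
Defined.

Definition LCsub (x y : LC) : LC := LCadd x (LCopp y).

Definition LCmono (a : R) (n : Z) : LC.
Proof.
  refine (mkLC (fun i => if Z.eqb i n then a else 0) _).
  exists n. intros i Hi. destruct (Z.eqb_spec i n); [lia|reflexivity].
Defined.

Definition LClt (x y : LC) : Prop :=
  exists n : Z, (forall i : Z, (i < n)%Z -> coef x i = coef y i) /\ coef x n < coef y n.

Definition LCabs (x : LC) : LC :=
  if excluded_middle_informative (LClt x LCzero) then LCopp x else x.

Definition LCdist (x y : LC) : LC := LCabs (LCsub y x).
Definition LCball (x r : LC) (z : LC) : Prop := LClt (LCdist x z) r.

Definition is_pos_iota (iota : LC) : Prop :=
  exists (m n : nat) (a : R), (m <= n)%nat /\ ((1 <= n)%nat -> a <> 0)
     /\ iota = LCmono a (Z.of_nat n) /\ LClt LCzero iota.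

Definition iota_open (O : LC -> Prop) : Prop :=
  forall x, O x -> exists iota, is_pos_iota iota /\ (forall z, LCball x iota z -> O z).

Definition iota_connected : Prop :=
  ~ exists U V : LC -> Prop, iota_open U /\ iota_open V /\
      (exists x, U x) /\ (exists x, V x) /\
      (forall x, ~ (U x /\ V x)) /\ (forall x, U x \/ V x).

Definition iota_hausdorff : Prop :=
  forall x y : LC, x <> y -> exists U V : LC -> Prop,
    iota_open U /\ iota_open V /\ U x /\ V y /\ (forall z, ~ (U z /\ V z)).

(* Main.v *)
Require Import Defs.
From Stdlib Require Import Reals ZArith Lra Lia ClassicalEpsilon FunctionalExtensionality ProofIrrelevance Classical.
Open Scope R_scope.

Lemma LC_ext (x y : LC) : (forall i, coef x i = coef y i) -> x = y.
Proof.
  destruct x as [cx px], y as [cy py]; simpl; intros H.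
  assert (cx = cy) by (apply functional_extensionality; exact H).
  subst cy. f_equal. apply proof_irrelevance.
Qed.

Lemma abs_coef (d : LC) :
  (LClt d LCzero /\ forall i, coef (LCabs d) i = - coef d i) \/
  (~ LClt d LCzero /\ forall i, coef (LCabs d) i = coef d i).
Proof.
  unfold LCabs. destruct (excluded_middle_informative (LClt d LCzero)) as [h|h].
  - left. split; [exact h|]. intros; simpl; reflexivity.
  - right. split; [exact h|]. reflexivity.
Qed.

Lemma ball_core (z w : LC) (n : Z) :
  LCball z (LCmono 1 n) w -> forall i, (i < n)%Z -> coef w i = coef z i.
Proof.
  unfold LCball, LCdist. set (d := LCsub w z).
  assert (Hd : forall i, coef d i = coef w i - coef z i).
  { intros; unfold d, LCsub; simpl; lra. }
  intros [k [Hk1 Hk2]].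
  assert (Hmono : forall i, coef (LCmono 1 n) i = if Z.eqb i n then 1 else 0) by reflexivity.
  assert (key : forall i, (i < n)%Z -> coef d i = 0).
  { destruct (abs_coef d) as [[Hlt Ha]|[Hnlt Ha]].
    - destruct Hlt as [m [Hm1 Hm2]].
      assert (Hm2' : coef d m < 0) by exact Hm2.
      assert (Hm1' : forall i, (i < m)%Z -> coef d i = 0) by exact Hm1.
      clear Hm1 Hm2; rename Hm1' into Hm1; rename Hm2' into Hm2.
      intros i Hi.
      destruct (Z_lt_le_dec i k) as [Hik|Hik].
      + specialize (Hk1 i Hik). rewrite Ha, Hmono in Hk1.
        destruct (Z.eqb_spec i n); [lia|]. lra.
      + exfalso. rewrite Ha, Hmono in Hk2.
        destruct (Z.eqb_spec k n); [lia|].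
        destruct (Z.lt_trichotomy m k) as [Hmk|[Hmk|Hmk]].
        * specialize (Hk1 m Hmk). rewrite Ha, Hmono in Hk1.
          destruct (Z.eqb_spec m n) as [Emn|Emn]; [subst m; apply (Z.lt_irrefl n); apply (Z.lt_trans _ i); [apply (Z.lt_le_trans _ k)|]; assumption|]. lra.
        * subst m. lra.
        * rewrite Hm1 in Hk2 by exact Hmk. lra.
    - intros i Hi.
      destruct (Z_lt_le_dec i k) as [Hik|Hik].
      + specialize (Hk1 i Hik). rewrite Ha, Hmono in Hk1.
        destruct (Z.eqb_spec i n); [lia|]. lra.
      + exfalso. rewrite Ha, Hmono in Hk2.
        destruct (Z.eqb_spec k n); [lia|].
        apply Hnlt. exists k. split.
        * intros j Hj. specialize (Hk1 j Hj). rewrite Ha, Hmono in Hk1.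
          destruct (Z.eqb_spec j n); [lia|]. simpl. exact Hk1.
        * simpl. exact Hk2. }
  intros i Hi. specialize (key i Hi). rewrite Hd in key. lra.
Qed.

Lemma pos_mono (n : nat) : is_pos_iota (LCmono 1 (Z.of_nat n)).
Proof.
  exists 0%nat, n, 1. split; [lia|]. split; [intros; lra|]. split; [reflexivity|].
  exists (Z.of_nat n). split.
  - intros i Hi. simpl. destruct (Z.eqb_spec i (Z.of_nat n)); [lia|reflexivity].
  - simpl. rewrite Z.eqb_refl. lra.
Qed.

Definition S (N : Z) (x : LC) (z : LC) : Prop := forall i, (i < N)%Z -> coef z i = coef x i.

Lemma S_open (N : Z) (x : LC) : iota_open (S N x).
Proof.
  intros z Hz. exists (LCmono 1 (Z.of_nat (Z.to_nat N))). split; [apply pos_mono|].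
  intros w Hw i Hi. rewrite (ball_core z w _ Hw i) by lia. apply Hz; exact Hi.
Qed.

Lemma Sc_open (N : Z) (x : LC) : iota_open (fun z => ~ S N x z).
Proof.
  intros z Hz. exists (LCmono 1 (Z.of_nat (Z.to_nat N))). split; [apply pos_mono|].
  intros w Hw HS. apply Hz. intros i Hi.
  rewrite <- (ball_core z w _ Hw i) by lia. apply HS; exact Hi.
Qed.

Theorem mainTheorem3 : ~ iota_connected /\ iota_hausdorff.
Proof.
  split.
  - intros Hc. apply Hc.
    exists (S 1 LCzero), (fun z => ~ S 1 LCzero z).
    split; [apply S_open|]. split; [apply Sc_open|].
    split; [exists LCzero; intros i _; reflexivity|].
    split.
    + exists (LCmono 1 (-1)). intros H. specialize (H (-1)%Z ltac:(lia)).
      simpl in H. lra.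
    + split; [intros x [h1 h2]; tauto|]. intros x. apply classic.
  - intros x y Hxy.
    destruct (classic (exists i, coef x i <> coef y i)) as [[i Hi]|Hn].
    + exists (S (i+1) x), (S (i+1) y).
      split; [apply S_open|]. split; [apply S_open|].
      split; [intros j _; reflexivity|]. split; [intros j _; reflexivity|].
      intros z [h1 h2]. apply Hi. rewrite <- (h1 i), <- (h2 i) by lia. reflexivity.
    + exfalso. apply Hxy. apply LC_ext. intros i.
      destruct (Req_dec (coef x i) (coef y i)); [assumption|].
      exfalso; apply Hn; exists i; assumption.
Qed.
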